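(* Let $\mathcal{F}$ be a class of maps satisfying: (i) $\mathcal{F}(Y,Y)$ contains the identity map for every Banach space $Y$; (ii) $\mathcal{F}(Y,Z)$ is a vector space for all Banach spaces $Y,Z$; (iii) if $A\colon Y\to U$ and $B\colon V\to Z$ are affine maps and $F\in\mathcal{F}(U,V)$, then $B\circ F\circ A\in\mathcal{F}(Y,Z)$. Then an affine equivariant integrator map $\phi$ is $\mathcal{F}$-invariant preserving if and only if it is $\mathcal{F}$-functionally equivariant.
   Context: All spaces are real Banach spaces; $\mathfrak{X}(Y)$ denotes the smooth vector fields on $Y$. A class of maps $\mathcal F$ assigns to each pair of Banach spaces $Y,Z$ a set $\mathcal F(Y,Z)$ of Gâteaux differentiable maps $Y\to Z$. An integrator map $\phi$ is a collection of smooth maps $\phi_Y\colon\mathfrak{X}(Y)\to\mathfrak{X}(Y)$, one for each Banach space $Y$; write $\phi(f)$. For Gâteaux differentiable $\chi\colon Y\to U$, $f\sim_\chi g$ means $\chi'(y)f(y)=g(\chi(y))$ for all $y$. $\phi$ is affine equivariant if for every affine $A\colon Y\to U$ between Banach spaces, $f\sim_A g$ implies $\phi(f)\sim_A\phi(g)$. Given $F\colon Y\to Z$ and $f\in\mathfrak X(Y)$, the augmented vector field is $g\in\mathfrak X(Y\times Z)$, $g(y,z)=(f(y),F'(y)f(y))$; $\phi$ is $F$-functionally equivariant if $\phi(f)\sim_{(\mathrm{id},F)}\phi(g)$ for all $f\in\mathfrak X(Y)$, where $(\mathrm{id},F)(y)=(y,F(y))$. $\phi$ is $F$-invariant preserving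 if for all $f\in\mathfrak X(Y)$, $F'f=0$ (i.e. $F'(y)f(y)=0$ for all $y$) implies $F'\phi(f)=0$. $\phi$ is $\mathcal F$-functionally equivariant (resp. $\mathcal F$-invariant preserving) if it is $F$-functionally equivariant (resp. $F$-invariant preserving) for all $F\in\mathcal F(Y,Z)$ and all Banach spaces $Y,Z$. *)

(* Defs.v *)
From HB Require Import structures.
From mathcomp Require Import all_boot all_order all_algebra.
From mathcomp Require Import all_classical all_reals all_analysis.
Set Implicit Arguments. Unset Strict Implicit. Unset Printing Implicit Defensive.
Import Order.TTheory GRing.Theory Num.Theory.
Import numFieldNormedType.Exports.
Local Open Scope classical_set_scope.
Local Open Scope ring_scope.

Section prodc.
Context {R : realType} {U V : completeNormedModType R}.
HB.instance Definition _ := isPointed.Build (U * V)%type (0, 0).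
Lemma prod_cauchy_cvg (F : set_system (U * V)%type) :
  ProperFilter F -> cauchy F -> cvg F.
Proof.
move=> FF /cauchyP cF.
have c1 : cauchy (fst @ F).
  apply/cauchyP => e e0; have [[x y] Fb] := cF e e0; exists x.
  move: Fb; rewrite /fmap /=; apply: filterS => -[a b] [] //.  
have c2 : cauchy (snd @ F).
  apply/cauchyP => e e0; have [[x y] Fb] := cF e e0; exists y.
  move: Fb; rewrite /fmap /=; apply: filterS => -[a b] [] //.  
have Ha : cvg (fst @ F) by apply: cauchy_cvg.
have Hb : cvg (snd @ F) by apply: cauchy_cvg.
apply/cvg_ex; exists (lim (fst @ F), lim (snd @ F)).
have := cvg_pair Ha Hb.
suff -> : (fun x : U * V => (x.1, x.2)) @ F = F by move=> h; apply: h.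
rewrite /fmap /=.
apply/funext => A; congr F; apply/funext => -[x y] //.
Qed.
HB.instance Definition _ := Uniform_isComplete.Build (U * V)%type prod_cauchy_cvg.
End prodc.

Section Defs.
Variable R : realType.

Definition gderiv (Y Z : normedModType R) (F : Y -> Z) (y v : Y) : Z :=
  derive F y v.

Definition gateaux_diff (Y Z : normedModType R) (F : Y -> Z) : Prop :=
  forall y : Y,
    (forall v : Y, derivable F y v) /\
    (forall (a : R) (u v : Y),
        gderiv F y (a *: u + v) = a *: gderiv F y u + gderiv F y v) /\
    continuous (gderiv F y).

(* C^k maps in the (Michal--Bastiani) sense: C^0 = continuous,
   C^{k+1} = all directional derivatives exist and (x,v) |-> F'(x)v is C^k.
   On Banach spaces C^infty in this sense coincides with Frechet C^infty. *)
Fixpoint Ck (k : nat) (X W : normedModType R) (h : X -> W) : Prop :=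
  match k with
  | 0 => continuous h
  | k'.+1 => (forall x v : X, derivable h x v) /\
             Ck k' (fun p : X * X => derive h p.1 p.2)
  end.

Definition smooth (X W : normedModType R) (h : X -> W) : Prop :=
  forall k, Ck k h.

Definition vfield (Y : normedModType R) (f : Y -> Y) : Prop := smooth f.

Definition affine (Y U : normedModType R) (A : Y -> U) : Prop :=
  exists (L : {linear Y -> U}) (c : U),
    continuous L /\ forall y, A y = L y + c.

Definition related (Y U : normedModType R) (chi : Y -> U)
    (f : Y -> Y) (g : U -> U) : Prop :=
  forall y, gderiv chi y (f y) = g (chi y).

Definition integrator_map :=
  forall Y : completeNormedModType R, (Y -> Y) -> (Y -> Y).

Definition integrator_ok (phi : integrator_map) : Prop :=
  forall (Y : completeNormedModType R) (f : Y -> Y), vfield f -> vfield (phi Y f).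

Definition affine_equivariant (phi : integrator_map) : Prop :=
  forall (Y U : completeNormedModType R) (A : Y -> U) (f : Y -> Y) (g : U -> U),
    affine A -> vfield f -> vfield g ->
    related A f g -> related A (phi Y f) (phi U g).

Definition augmented (Y Z : normedModType R) (F : Y -> Z) (f : Y -> Y) :
    Y * Z -> Y * Z :=
  fun p => (f p.1, gderiv F p.1 (f p.1)).

Definition graph_map (Y Z : normedModType R) (F : Y -> Z) : Y -> Y * Z :=
  fun y => (y, F y).

Definition F_functionally_equivariant (phi : integrator_map)
    (Y Z : completeNormedModType R) (F : Y -> Z) : Prop :=
  forall f : Y -> Y, vfield f -> vfield (augmented F f) ->
    related (graph_map F) (phi Y f) (phi _ (augmented F f)).

Definition F_invariant_preserving (phi : integrator_map)
    (Y Z : completeNormedModType R) (F : Y -> Z) : Prop :=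
  forall f : Y -> Y, vfield f ->
    (forall y, gderiv F y (f y) = 0) ->
    (forall y, gderiv F y (phi Y f y) = 0).

Definition map_class :=
  forall Y Z : completeNormedModType R, set (Y -> Z).

Definition class_ok (C : map_class) : Prop :=
  forall (Y Z : completeNormedModType R) (F : Y -> Z), C Y Z F -> gateaux_diff F.

Definition class_functionally_equivariant (phi : integrator_map) (C : map_class) :=
  forall (Y Z : completeNormedModType R) (F : Y -> Z),
    C Y Z F -> F_functionally_equivariant phi F.

Definition class_invariant_preserving (phi : integrator_map) (C : map_class) :=
  forall (Y Z : completeNormedModType R) (F : Y -> Z),
    C Y Z F -> F_invariant_preserving phi F.

End Defs.

(* Main.v *)
Require Import Defs.
From HB Require Import structures.
From mathcomp Require Import all_boot all_order all_algebra.
From mathcomp Require Import all_classical all_reals all_analysis.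
Import Order.TTheory GRing.Theory Num.Theory.
Import numFieldNormedType.Exports.
Local Open Scope classical_set_scope.
Local Open Scope ring_scope.

Section S.
Context {R : realType}.

Lemma dq_ext {V V' W : normedModType R} (f : V -> W) (g : V' -> W) a v b w :
  (forall h : R, f (h *: v + a) = g (h *: w + b)) ->
  (derivable f a v <-> derivable g b w) /\ 'D_v f a = 'D_w g b.
Proof.
move=> H.
have E : (fun h : R => h^-1 *: ((f \o shift a) (h *: v) - f a)) =
         (fun h : R => h^-1 *: ((g \o shift b) (h *: w) - g b)).
  apply/funext => h /=; rewrite /shift H.
  have -> : f a = g b by have := H 0; rewrite !scale0r !add0r.
  by [].
by rewrite /derivable /derive E.
Qed.

Lemma dq_lin {V W : normedModType R} (P : V -> W)
  (hl : forall (a : R) u v, P (a *: u + v) = a *: P u + P v) x v :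
  derivable P x v /\ 'D_v P x = P v.
Proof.
have E : {near (0:R)^', cst (P v) =1 (fun h : R => h^-1 *: ((P \o shift x) (h *: v) - P x))}.
  near=> h; apply/esym; rewrite /= /shift hl addrK scalerA mulVf ?scale1r //.
  by near: h; exact: nbhs_dnbhs_neq.
have C : (fun h : R => h^-1 *: ((P \o shift x) (h *: v) - P x)) @ (0:R)^' --> P v.
  apply: cvg_trans (near_eq_cvg E) _; exact: cvg_cst.
split; first by apply/cvg_ex; exists (P v).
exact: cvg_lim.
Unshelve. all: by end_near.
Qed.

Lemma dq_pair {V W1 W2 : normedModType R} (f : V -> W1) (g : V -> W2) a v :
  derivable f a v -> derivable g a v ->
  derivable (fun x => (f x, g x)) a v /\
  'D_v (fun x => (f x, g x)) a = ('D_v f a, 'D_v g a).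
Proof.
move=> df dg.
have C : (fun h : R => h^-1 *: (((fun x => (f x, g x)) \o shift a) (h *: v) - (f a, g a))) @ (0:R)^'
   --> ('D_v f a, 'D_v g a).
  exact: (cvg_pair df dg).
split; first by apply/cvg_ex; eexists; exact: C.
exact: cvg_lim.
Qed.


Lemma Ck_cst k : forall (X W : normedModType R) (c : W), Ck k (fun _ : X => c).
Proof.
elim: k => [|k IH] X W c /=; first by move=> x; exact: cvg_cst.
split; first by move=> x v; exact: (derivable_cst c).
have -> : (fun p : X * X => 'D_p.2 (fun _ : X => c) p.1) = fun _ => 0.
  by apply/funext => p; exact: (derive_cst c).
exact: IH.
Qed.

Lemma Ck_lift k : forall (X' X W Z : normedModType R) (P : X' -> X)
  (hl : forall (a : R) u v, P (a *: u + v) = a *: P u + P v)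
  (hc : continuous P) (h : X -> W),
  Ck k h -> Ck k (fun q => (h (P q), (0:Z))).
Proof.
elim: k => [|k IH] X' X W Z P hl hc h /=.
  move=> ch q; apply: cvg_pair; last exact: cvg_cst.
  exact: (continuous_comp (hc q) (ch (P q))).
move=> [dh ch].
have D : forall q r : X', derivable (fun q => (h (P q), (0:Z))) q r /\
   derive (fun q => (h (P q), (0:Z))) q r = (derive h (P q) (P r), 0).
  move=> q r.
  have [e1 e2] := @dq_ext X' X W (fun x => h (P x)) h q r (P q) (P r)
     (fun t => congr1 h (hl t r q)).
  have d1 : derivable (fun x => h (P x)) q r by apply/e1.
  have [d3 e3] := dq_pair _ _ _ _ d1 (derivable_cst (0:Z) q r).
  split => //; rewrite e3 e2; congr pair; exact: (derive_cst (0:Z)).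
split; first by move=> q r; exact: (D q r).1.
have -> : (fun p : X' * X' => 'D_p.2 (fun q => (h (P q), (0:Z))) p.1) =
   fun p => ((fun p : X * X => 'D_p.2 h p.1) (P p.1, P p.2), (0:Z)).
  by apply/funext => p; rewrite (D p.1 p.2).2.
apply: (IH _ _ W Z (fun p : X' * X' => (P p.1, P p.2)) _ _ _ ch).
  by move=> a u v /=; rewrite !hl.
move=> p; apply: cvg_pair.
  exact: (continuous_comp (@cvg_fst _ _ _ _ _) (hc p.1)).
exact: (continuous_comp (@cvg_snd _ _ _ _ _) (hc p.2)).
Qed.


Lemma aff_lin {Y U : normedModType R} (L : {linear Y -> U}) :
  continuous L -> affine L.
Proof. by move=> cL; exists L, 0; split => // y; rewrite addr0. Qed.

Lemma aff_cst {Y U : normedModType R} (c : U) : affine (fun _ : Y => c).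
Proof.
exists (\0 : {linear Y -> U}), c; split; first by move=> x; exact: cvg_cst.
by move=> y; rewrite /= add0r.
Qed.

Lemma cont_fst {Y Z : normedModType R} : continuous (fst : Y * Z -> Y).
Proof. by move=> x; exact: cvg_fst. Qed.
Lemma cont_snd {Y Z : normedModType R} : continuous (snd : Y * Z -> Z).
Proof. by move=> x; exact: cvg_snd. Qed.
Lemma cont_id {Y : normedModType R} : continuous (idfun : Y -> Y).
Proof. by move=> x. Qed.

Lemma d_graph {Y Z : normedModType R} (F : Y -> Z) y w :
  derivable F y w -> gderiv (graph_map F) y w = (w, gderiv F y w).
Proof.
move=> dF.
have [di ei] := dq_lin (fun x : Y => x) (fun a u v => erefl) y w.
have [_ e] := dq_pair (fun x : Y => x) F y w di dF.
by rewrite /gderiv /graph_map e ei.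
Qed.

End S.

Theorem theorem2p9 (R : realType) (C : map_class R) (phi : integrator_map R) :
  class_ok C ->
  (* (i) identity *)
  (forall Y : completeNormedModType R, C Y Y id) ->
  (* (ii) vector space *)
  (forall Y Z : completeNormedModType R, C Y Z (fun _ => 0)) ->
  (forall (Y Z : completeNormedModType R) (F G : Y -> Z),
      C Y Z F -> C Y Z G -> C Y Z (fun y => F y + G y)) ->
  (forall (Y Z : completeNormedModType R) (a : R) (F : Y -> Z),
      C Y Z F -> C Y Z (fun y => a *: F y)) ->
  (* (iii) closure under affine pre/post-composition *)
  (forall (Y U V Z : completeNormedModType R) (A : Y -> U) (B : V -> Z) (F : U -> V),
      affine A -> affine B -> C U V F -> C Y Z (B \o F \o A)) ->
  integrator_ok phi ->
  affine_equivariant phi ->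
  (class_invariant_preserving phi C <-> class_functionally_equivariant phi C).
Proof.
Proof.
move=> Cok Cid C0 Cadd Cscal Caff phiok phiaff.
have dF : forall (Y Z : completeNormedModType R) (F : Y -> Z), C Y Z F ->
    forall y w, derivable F y w by move=> Y Z F CF y w; exact: ((Cok _ _ F CF y).1 w).
have hfst : forall (Y Z : completeNormedModType R) p (v : Y * Z),
    gderiv fst p v = v.1.
  by move=> Y Z p v; exact: (dq_lin (fst : Y * Z -> Y) (fun a u v => erefl) p v).2.
have hsnd : forall (Y Z : completeNormedModType R) p (v : Y * Z),
    gderiv snd p v = v.2.
  by move=> Y Z p v; exact: (dq_lin (snd : Y * Z -> Z) (fun a u v => erefl) p v).2.
split.
- move=> HIP Y Z F CF f vf vg y.
  set g := augmented F f.
  have ha : forall p, (phi _ g p).1 = phi Y f p.1.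
    move=> p; rewrite -(hfst Y Z p).
    apply: (phiaff _ _ fst g f (aff_lin _ cont_fst) vg vf) => q.
    by rewrite hfst.
  have C1 : C (Y * Z)%type Z (id \o id \o snd) :=
    Caff _ _ _ _ snd id id (aff_lin _ cont_snd) (aff_lin idfun cont_id) (Cid Z).
  have C2 : C (Y * Z)%type Z (id \o F \o fst) :=
    Caff _ _ _ _ fst id F (aff_lin _ cont_fst) (aff_lin idfun cont_id) CF.
  have C4 := Cadd _ _ _ _ C1 (Cscal _ _ (-1) _ C2).
  set G := (fun y => _) in C4.
  have dG : forall p v, gderiv G p v = v.2 - gderiv F p.1 v.1.
    move=> p v.
    have -> : G = (snd : Y * Z -> Z) + (-1) \*: (fun q => F q.1) by [].
    have [e1 e2] := dq_ext (fun q : Y * Z => F q.1) F p v p.1 v.1 (fun t => erefl).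
    have d1 : derivable (fun q : Y * Z => F q.1) p v by apply/e1; exact: dF.
    rewrite /gderiv deriveD //; last first.
      by apply: derivableZ.
      exact: (dq_lin snd (fun a u v => erefl) p v).1.
    rewrite deriveZ // e2 (dq_lin snd (fun a u v => erefl) p v).2.
    by rewrite scaleN1r.
  have hb : forall p, (phi _ g p).2 = gderiv F p.1 (phi Y f p.1).
    move=> p; have := HIP _ _ G C4 g vg _ p.
    rewrite dG ha => H; apply/eqP; rewrite -subr_eq0; apply/eqP; apply: H.
    by move=> q; rewrite dG subrr.
  rewrite d_graph; last exact: dF.
  by rewrite [RHS]surjective_pairing ha hb.
- move=> HFE Y Z F CF f vf Hf y.
  set g := augmented F f.
  have Eg : g = fun p => (f p.1, (0 : Z)).
    by apply/funext => p; rewrite /g /augmented Hf.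
  have vg : vfield g.
    rewrite Eg => k; exact: (Ck_lift k _ _ _ Z fst (fun a u v => erefl) cont_fst f (vf k)).
  have v0 : vfield (fun _ : Z => (0 : Z)) by move=> k; exact: Ck_cst.
  have z0 : forall c : Z, phi Z (fun _ => 0) c = 0.
    move=> c; have := phiaff Z Z (fun _ => c) (fun _ => 0) (fun _ => 0) (aff_cst c) v0 v0.
    move=> H; rewrite -(H _ c); first by rewrite /gderiv derive_cst.
    by move=> z; rewrite /gderiv derive_cst.
  have hz : forall p, (phi _ g p).2 = 0.
    move=> p; rewrite -(hsnd Y Z p) (phiaff _ _ snd g (fun _ => 0) (aff_lin _ cont_snd) vg v0) ?z0 //.
    by move=> q; rewrite hsnd /g /augmented /= Hf.
  have := HFE Y Z F CF f vf vg y.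
  rewrite /related d_graph; last exact: dF.
  by move=> /(congr1 snd) /= ->; rewrite hz.
Qed.
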